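(* Let $\Sigma\in\mathcal{G}_n$ and let $Q_0$ be the unique regular rational orthogonal matrix with $Q_0^{\rm T}S(\Sigma)Q_0=S(\Sigma^{\rm T})$; suppose its level is $\ell_0=p_1p_2$ with $p_1,p_2$ distinct odd primes. Suppose $\Sigma$ is not WDGSS and that its generalized cospectral mates (up to isomorphism) are $\Sigma^{\rm T}$, $\Delta$ and $\Delta^{\rm T}$. Let $Q_1\in\mathcal{Q}(\Sigma)$ of level $p_1$ satisfy $Q_1^{\rm T}S(\Sigma)Q_1=S(\Delta)$, and let $Q_2$ be a regular rational orthogonal matrix of level $p_2$ satisfying $Q_2^{\rm T}S(\Delta)Q_2=S(\Sigma^{\rm T})$. If $\hat Q_0$ is a regular rational orthogonal matrix with $\hat Q_0^{\rm T}S(\Delta^{\rm T})\hat Q_0=S(\Delta)$, then $\hat Q_0=Q_2Q_1$ and the level of $\hat Q_0$ is $p_1p_2$.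
   Context: An oriented graph on vertices $v_1,\dots,v_n$ is a simple graph with each edge directed; its skew-adjacency matrix $S=(s_{ij})$ has $s_{ij}=1$ if $(v_i,v_j)$ is an arc, $-1$ if $(v_j,v_i)$ is an arc, $0$ otherwise. The converse $\Delta^{\rm T}$ of $\Delta$ reverses every arc, so $S(\Delta^{\rm T})=-S(\Delta)$. Two oriented graphs are isomorphic if their skew-adjacency matrices are conjugate by a permutation matrix; they are generalized cospectral if their skew-adjacency matrices $S$ have the same spectrum and the matrices $J-I-S$ have the same spectrum. A generalized cospectral mate of $\Sigma$ is an oriented graph generalized cospectral with but not isomorphic to $\Sigma$. $\Sigma$ is WDGSS if every oriented graph generalized cospectral with $\Sigma$ is isomorphic to $\Sigma$ or $\Sigma^{\rm T}$. With $e$ the all-one vector, $W(\Sigma)=[e,Se,\dots,S^{n-1}e]$, $S=S(\Sigma)$. $\mathcal{G}_n$ is the set of $n$-vertex oriented graphs with $2^{-\lfloor n/2\rfloor}\det W(\Sigma)$ an odd square-free integer. A rational orthogonal matrix $Q$ is regular if $Qe=e$; its level is the least positive integer $k$ with $kQ$ integral. $\mathcal{Q}(\Sigma)$ is the set of regular rational orthogonal $Q$ with $Q^{\rm T}S(\Sigma)Q=S(\Gamma)$ for some oriented graph $\Gamma$ generalized cospectral with $\Sigma$. *)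

(* Defs.v *)
From HB Require Import structures.
From mathcomp Require Import all_boot all_order all_algebra all_fingroup.
Set Implicit Arguments. Unset Strict Implicit. Unset Printing Implicit Defensive.
Import Order.TTheory GRing.Theory Num.Theory.
Local Open Scope ring_scope.

(* An oriented graph on n vertices is represented by its skew-adjacency
   matrix S : entries in {0,1,-1}, S^T = -S (hence zero diagonal). *)
Definition is_oriented (n : nat) (S : 'M[rat]_n) : Prop :=
  (forall i j, S i j \in [:: 0; 1; -1]) /\ S^T = - S.

Definition converse (n : nat) (S : 'M[rat]_n) : 'M[rat]_n := - S.

Definition og_iso (n : nat) (S1 S2 : 'M[rat]_n) : Prop :=
  exists s : 'S_n, (perm_mx s)^T *m S1 *m perm_mx s = S2.

Definition allones (n : nat) : 'M[rat]_n := const_mx 1.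

Definition gen_cospectral (n : nat) (S1 S2 : 'M[rat]_n) : Prop :=
  char_poly S1 = char_poly S2 /\
  char_poly (allones n - 1%:M - S1) = char_poly (allones n - 1%:M - S2).

Definition WDGSS (n : nat) (S : 'M[rat]_n) : Prop :=
  forall G : 'M[rat]_n, is_oriented G -> gen_cospectral S G ->
    og_iso S G \/ og_iso (converse S) G.

Definition walk_mx (n : nat) (S : 'M[rat]_n) : 'M[rat]_n :=
  \matrix_(i < n, j < n) ((S ^+ j) *m (const_mx 1 : 'cV[rat]_n)) i ord0.

Definition squarefree (m : nat) : Prop :=
  forall p, prime p -> ~~ (p * p %| m)%N.

Definition in_Gn (n : nat) (S : 'M[rat]_n) : Prop :=
  is_oriented S /\
  exists m : int, \det (walk_mx S) = (2 ^+ n./2) * m%:~R /\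
                  odd `|m|%N /\ squarefree `|m|%N.

Definition reg_orth (n : nat) (Q : 'M[rat]_n) : Prop :=
  Q^T *m Q = 1%:M /\ Q *m (const_mx 1 : 'cV[rat]_n) = const_mx 1.

Definition integral_mx (n : nat) (A : 'M[rat]_n) : Prop :=
  forall i j, A i j \is a Num.int.

Definition has_level (n : nat) (Q : 'M[rat]_n) (k : nat) : Prop :=
  (0 < k)%N /\ integral_mx (k%:R *: Q) /\
  forall j : nat, (0 < j)%N -> integral_mx (j%:R *: Q) -> (k <= j)%N.

(* Main.v *)
Require Import Defs.
From HB Require Import structures.
From mathcomp Require Import all_boot all_order all_algebra all_fingroup.
Import Order.TTheory GRing.Theory Num.Theory.
Local Open Scope ring_scope.
Set Implicit Arguments.

Lemma walk_conj (n : nat) (X Y A : 'M[rat]_n) :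
  reg_orth A -> A^T *m X *m A = Y -> A^T *m walk_mx X = walk_mx Y.
Proof.
case=> HAA HAe HXY.
have HAAt : A *m A^T = 1%:M by apply: mulmx1C.
have Hc : A^T *m X = Y *m A^T by rewrite -HXY -mulmxA HAAt mulmx1.
have Hk : forall k, A^T *m X ^+ k = Y ^+ k *m A^T.
  elim=> [|k IH]; first by rewrite !expr0 mulmx1 mul1mx.
  by rewrite !exprS -!mulmxE mulmxA Hc -mulmxA IH mulmxA.
have Ae : A^T *m (const_mx 1 : 'cV[rat]_n) = const_mx 1.
  by rewrite -{1}HAe mulmxA HAA mul1mx.
apply/matrixP => i j.
transitivity ((A^T *m (X ^+ j *m (const_mx 1 : 'cV[rat]_n))) i (ord0 : 'I_1)).
  by rewrite !mxE; apply: eq_bigr => k _; rewrite !mxE.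
by rewrite mulmxA Hk -mulmxA Ae /walk_mx mxE.
Qed.

Lemma uniq_conj (n : nat) (X Y A B : 'M[rat]_n) :
  \det (walk_mx X) != 0 -> reg_orth A -> reg_orth B ->
  A^T *m X *m A = Y -> B^T *m X *m B = Y -> A = B.
Proof.
move=> Hd RA RB HA HB.
have := walk_conj RA HA; rewrite -(walk_conj RB HB) => E.
have U : walk_mx X \in unitmx by rewrite unitmxE unitfE.
apply: trmx_inj.
by rewrite -(mulmxK U A^T) E mulmxK.
Qed.

Lemma integral_mul (n : nat) (A B : 'M[rat]_n) :
  integral_mx A -> integral_mx B -> integral_mx (A *m B).
Proof.
move=> HA HB i j; rewrite mxE; apply: rpred_sum => k _; apply: rpredM; [exact: HA| exact: HB].
Qed.

Lemma integral_tr (n : nat) (A : 'M[rat]_n) :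
  integral_mx A -> integral_mx A^T.
Proof. by move=> HA i j; rewrite mxE. Qed.

Lemma level_dvd (n : nat) (Q : 'M[rat]_n) (k j : nat) :
  has_level Q k -> (0 < j)%N -> integral_mx (j%:R *: Q) -> (k %| j)%N.
Proof.
case=> k0 [Hk Hmin] j0 Hj.
rewrite /dvdn; apply/negPn/negP => Hr.
have Hd := divn_eq j k.
set q := (j %/ k)%N in Hd *; set r := (j %% k)%N in Hd Hr *.
have : (k <= r)%N.
  apply: Hmin; first by rewrite lt0n.
  have -> : r%:R *: Q = j%:R *: Q - (q * k)%:R *: Q.
    by rewrite {1}Hd natrD scalerDl addrAC subrr add0r.
  move=> a b; rewrite mxE; apply: rpredD; first exact: Hj.
  rewrite mxE rpredN.
  rewrite natrM -scalerA mxE; apply: rpredM; [exact: rpred_nat | exact: Hk].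
by rewrite leqNgt /r ltn_pmod.
Qed.

Theorem lemma5p3 (n : nat) (Sig Del Q0 Q1 Q2 Qh : 'M[rat]_n) (p1 p2 : nat) :
  in_Gn Sig ->
  reg_orth Q0 -> Q0^T *m Sig *m Q0 = converse Sig ->
  prime p1 -> prime p2 -> odd p1 -> odd p2 -> p1 != p2 ->
  has_level Q0 (p1 * p2) ->
  ~ WDGSS Sig ->
  is_oriented Del -> gen_cospectral Sig Del ->
  (* the mates Sig^T, Del, Del^T are pairwise non-isomorphic and
     non-isomorphic to Sig *)
  ~ og_iso Sig (converse Sig) ->
  ~ og_iso Sig Del -> ~ og_iso (converse Sig) Del ->
  ~ og_iso Del (converse Del) ->
  (forall G : 'M[rat]_n, is_oriented G -> gen_cospectral Sig G ->
     [\/ og_iso Sig G, og_iso (converse Sig) G, og_iso Del G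
       | og_iso (converse Del) G]) ->
  reg_orth Q1 -> has_level Q1 p1 -> Q1^T *m Sig *m Q1 = Del ->
  reg_orth Q2 -> has_level Q2 p2 -> Q2^T *m Del *m Q2 = converse Sig ->
  reg_orth Qh -> Qh^T *m converse Del *m Qh = Del ->
  Qh = Q2 *m Q1 /\ has_level Qh (p1 * p2).
Proof.
move=> [Sor [m [Hdet [Hodd _]]]] _ _ P1 P2 _ _ P12 _ _ _ _ _ _ _ _ _
  R1 L1 H1 R2 L2 H2 Rh Hh.
have dS : \det (walk_mx Sig) != 0.
  rewrite Hdet mulf_neq0 // ?expf_neq0 // intr_eq0.
  by apply: contraTneq Hodd => ->.
have dQ1 : \det Q1 != 0.
  have := congr1 determinant R1.1; rewrite det_mulmx det_tr det1 => E.
  by apply/eqP => E0; move: E; rewrite E0 mulr0 => /eqP; rewrite eq_sym oner_eq0.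
have dD : \det (walk_mx Del) != 0.
  by rewrite -(walk_conj R1 H1) det_mulmx det_tr mulf_neq0.
have Q1Q1t : Q1 *m Q1^T = 1%:M by apply: mulmx1C; exact: R1.1.
have R21 : reg_orth (Q2 *m Q1).
  split; first by rewrite trmx_mul -mulmxA (mulmxA Q2^T) R2.1 mul1mx R1.1.
  by rewrite -mulmxA R1.2 R2.2.
have EQ : Qh = Q2 *m Q1.
  apply: (uniq_conj dD Rh R21 (Y := converse Del)).
    by move: Hh; rewrite /converse mulmxN mulNmx => Hh; rewrite -{2}Hh opprK.
  rewrite trmx_mul -!mulmxA (mulmxA Q2^T) (mulmxA (Q2^T *m Del)) H2.
  by rewrite /converse mulNmx mulmxN mulmxA H1.
split=> //; subst Qh.
split; first by rewrite muln_gt0 !prime_gt0.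
split.
  have -> : (p1 * p2)%:R *: (Q2 *m Q1) = (p2%:R *: Q2) *m (p1%:R *: Q1).
    by rewrite -scalemxAl -scalemxAr scalerA -natrM mulnC.
  apply: integral_mul; [exact: L2.2.1 | exact: L1.2.1].
move=> j j0 Hj.
have d1 : (p1 %| p2 * j)%N.
  apply: (level_dvd _ L1); first by rewrite muln_gt0 prime_gt0.
  have -> : (p2 * j)%:R *: Q1 = (p2%:R *: Q2^T) *m (j%:R *: (Q2 *m Q1)).
    by rewrite -scalemxAl -scalemxAr scalerA mulmxA R2.1 mul1mx -natrM.
  have -> : p2%:R *: Q2^T = (p2%:R *: Q2)^T by apply/matrixP=> a b; rewrite !mxE.
  apply: integral_mul => //; apply: integral_tr; exact: L2.2.1.
have d2 : (p2 %| p1 * j)%N.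
  apply: (level_dvd _ L2); first by rewrite muln_gt0 prime_gt0.
  have -> : (p1 * j)%:R *: Q2 = (j%:R *: (Q2 *m Q1)) *m (p1%:R *: Q1^T).
    by rewrite -scalemxAl -scalemxAr scalerA -mulmxA Q1Q1t mulmx1 -natrM mulnC.
  have -> : p1%:R *: Q1^T = (p1%:R *: Q1)^T by apply/matrixP=> a b; rewrite !mxE.
  apply: integral_mul => //; apply: integral_tr; exact: L1.2.1.
have c12 : coprime p1 p2 by rewrite prime_coprime // dvdn_prime2.
have c21 : coprime p2 p1 by rewrite prime_coprime // dvdn_prime2 // eq_sym.
move: d1 d2; rewrite !Euclid_dvdM // dvdn_prime2 // (negPf P12).
rewrite (dvdn_prime2 P2 P1) eq_sym (negPf P12) /= => d1 d2.
by apply: dvdn_leq => //; rewrite Gauss_dvd // d1 d2.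
Qed.
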